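(* Let $n\ge1$, $D\ge1$, and let $X_n=\{\mathbf{x}^0,\ldots,\mathbf{x}^{n-1}\}\subseteq\{0,1\}^D$ consist of $n$ pairwise distinct vectors, indexed so that $\mathbf{a}\cdot\mathbf{x}^0<\cdots<\mathbf{a}\cdot\mathbf{x}^{n-1}$ for some $\mathbf{a}\in\mathbb{Z}^D$. Then there is a three-layer Boolean threshold network with layer sizes $D$, $n$, $D$ that is a perfect autoencoder for $X_n$, with the second layer as middle layer.
   Context: A Boolean threshold function is a map $\{0,1\}^h\to\{0,1\}$, $\mathbf{u}\mapsto[\mathbf{w}\cdot\mathbf{u}\ge\theta]$ (value $1$ iff $\mathbf{w}\cdot\mathbf{u}\ge\theta$) with $\mathbf{w}\in\mathbb{Z}^h,\theta\in\mathbb{Z}$. An $L$-layer Boolean threshold network has layers $1,\ldots,L$; layer $1$ is the input; each node of layer $t+1$ computes a Boolean threshold function of the values of layer $t$. If layer $k$ is designated the middle layer, the encoder $\mathbf{f}$ is the map from layer $1$ values to layer $k$ values and the decoder $\mathbf{g}$ the map from layer $k$ values to layer $L$ values; the network is a perfect autoencoder for $X_n$ if $\mathbf{g}(\mathbf{f}(\mathbf{x}^i))=\mathbf{x}^i$ for all $i$. *)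

(* Defs.v *)
From mathcomp Require Import all_boot all_order all_algebra.
Set Implicit Arguments. Unset Strict Implicit. Unset Printing Implicit Defensive.
Import Order.TTheory GRing.Theory Num.Theory.
Local Open Scope ring_scope.

Definition bvec (h : nat) := {ffun 'I_h -> bool}.

Definition bdot (h : nat) (w : 'I_h -> int) (u : bvec h) : int :=
  \sum_(i < h) w i * (u i)%:R.

Definition threshold (h : nat) (w : 'I_h -> int) (theta : int) (u : bvec h) : bool :=
  theta <= bdot w u.

Definition layer (h m : nat) (W : 'I_m -> 'I_h -> int) (th : 'I_m -> int)
  (u : bvec h) : bvec m :=
  [ffun j => threshold (W j) (th j) u].

(* Main.v *)
Require Import Defs.
From mathcomp Require Import all_boot all_order all_algebra.
Import Order.TTheory GRing.Theory Num.Theory.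
Local Open Scope ring_scope.

Theorem theorem18 (n D : nat) (hn : (1 <= n)%N) (hD : (1 <= D)%N)
  (x : 'I_n -> bvec D) (hx : injective x)
  (hord : exists a : 'I_D -> int,
            forall i j : 'I_n, (i < j)%N -> bdot a (x i) < bdot a (x j)) :
  exists (W1 : 'I_n -> 'I_D -> int) (th1 : 'I_n -> int)
         (W2 : 'I_D -> 'I_n -> int) (th2 : 'I_D -> int),
    forall i : 'I_n, layer W2 th2 (layer W1 th1 (x i)) = x i.
Proof.
case: hord => a ha.
pose X (k : 'I_D) (m : nat) : int :=
  if m is m'.+1 then ((x (insubd (Ordinal hn) m') k : bool)%:R : int) else 0.
exists (fun _ => a), (fun j => bdot a (x j)),
  (fun k (j : 'I_n) => X k j.+1 - X k j), (fun _ => 1).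
move=> i.
have mid : forall j : 'I_n, layer (fun _ => a) (fun j => bdot a (x j)) (x i) j = (j <= i)%N.
  move=> j; rewrite ffunE /threshold.
  case: (ltngtP j i) => h.
  - by rewrite (ltW (ha _ _ h)).
  - by apply/negbTE; rewrite -ltNge ha.
  - by rewrite (val_inj h) lexx.
apply/ffunP => k; rewrite ffunE /threshold /bdot.
under eq_bigr => j _ do rewrite mid.
set F := fun j : nat => (X k j.+1 - X k j) * (j <= i)%N%:R.
rewrite -(big_mkord xpredT F).
rewrite (big_cat_nat _ (n := i.+1)) //=.
have -> : \sum_(i.+1 <= j < n) F j = 0.
  rewrite big_nat_cond big1 // => j /andP[/andP[hj _] _].
  by rewrite /F leqNgt hj mulr0.
rewrite addr0 (@telescope_sumr_eq _ 0 i.+1 (X k)) //.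
  by rewrite subr0 /X /= valKd; case: (x i k).
by move=> j /andP[_ hj]; rewrite ltnS in hj; rewrite /F hj mulr1.
Qed.
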